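(* Assume (H). For any finite sequence of types ${\bf x}=(x_1,\dots,x_r)\in[K]^r$ and any non-negative measurable functions $G_1,G_2$, $$E^{\bf x}\Big[\sum_{v\in F}G_1(v,[F]_v)\,G_2(F_v)\Big]=\sum_{j=1}^rb_{x_j}\sum_{h\ge0}\widehat E^{{\bf x},j,h}\Big[\frac{G_1(V,F)\,E^{(e(V))}[G_2(T)]}{b_{e(V)}}\Big].$$
   Context: Let $K\ge1$ be an integer and $[K]=\{1,\dots,K\}$. ${\boldsymbol\zeta}=(\zeta^{(i)})$ is a family of probability measures on the set $\mathcal W_K$ of finite (possibly empty) $[K]$-valued sequences; $p({\bf w})\in\mathbb Z_+^K$ counts entries of each type and $\mu^{(i)}=p_*\zeta^{(i)}$. Set $m_{ij}=\sum z_j\mu^{(i)}(\{{\bf z}\})$, $M=(m_{ij})$ and $Q^{(i)}_{jk}=\partial^2\varphi^{(i)}/\partial s_j\partial s_k({\bf 1})$, with $\varphi^{(i)}({\bf s})=\sum\mu^{(i)}(\{{\bf z}\})\prod s_l^{z_l}$. Hypothesis (H) means all of the following: $M$ is irreducible; some $\mu^{(i)}$ charges $\{\sum z_l\ne1\}$; the spectral radius of $M$ is $1$; and all $Q^{(i)}_{jk}<\infty$. Then ${\bf b}$ is the right $1$-eigenvector of $M$ (positive entries) normalized by $\sum a_ib_i=1$, where ${\bf a}$ is the left $1$-eigenvector with $\sum a_i=1$. Trees and forests. Trees are finite subsets $t$ of the set $\mathcal U$ of finite words over $\mathbb N$ containing $\varnothing$, such that $ui\in t$ implies $u\in t$ and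 $uj\in t$ for $j\le i$, with types $e(\cdot)\in[K]$ and ${\bf w}_t(u)=(e(u1),\dots,e(uc_t(u)))$. A forest is $f=\bigcup_kk\,t_{(k)}$. For $u\in f$: - $f_u=\{v:uv\in f\}$ is the fringe subtree at $u$, with inherited types; - $[f]_u=\{u\}\cup(f\setminus uf_u)$ is the forest pruned at $u$, with restricted types. Galton–Watson laws. $P^{(i)}(T=t)=\prod_u\zeta^{(e(u))}({\bf w}_t(u))$ for root type $i$. $P^{\bf x}$ is the law of $F=\bigcup_{k=1}^rk\,T_k$ with independent $T_k\sim P^{(x_k)}$. $E^{(i)},E^{\bf x}$ denote the corresponding expectations. Size-biased tree. Let $\widehat\zeta^{(i)}({\bf w})=\frac{p({\bf w})\cdot{\bf b}}{b_i}\zeta^{(i)}({\bf w})$, a probability measure on $\mathcal W_K$. Build an infinite random $K$-type tree with a spine $V_0=\varnothing,V_1,V_2,\dots$, where $e(V_0)=i$: - a spine vertex $V_n$ of type $j$ has children types ${\bf w}$ drawn from $\widehat\zeta^{(j)}$; given ${\bf w}$, an index $l$ is chosen with probability $b_{w_l}/(p({\bf w})\cdot{\bf b})$, and $V_{n+1}=V_nl$; - every non-spine vertex of type $j$ has children types drawn from $\zeta^{(j)}$; - all choices are independent. $\widehat P^{(i),h}$ is the law of the pair $([\,\text{tree}\,]_{V_h},V_h)$, a finite tree with a distinguished vertex at height $h$. For ${\bf x}=(x_1,\dots,x_r)$, $1\le j\le r$ and $h\ge0$, $\widehat P^{{\bf x},j,h}$ is the law of the pointed forest $(F,V)$ where: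 - the components $F_l$, $l\ne j$, and $F_j$ are independent; - $F_l\sim P^{(x_l)}$ for $l\neq j$; - $(F_j,V')\sim\widehat P^{(x_j),h}$, and $V=jV'$. $\widehat E^{{\bf x},j,h}$ is the corresponding expectation, and $T$ denotes the identity map on trees. *)

(* Defs.v *)
From HB Require Import structures.
From mathcomp Require Import all_boot all_order all_algebra.
From mathcomp Require Import finmap.
From mathcomp Require Import boolp classical_sets reals constructive_ereal ereal esum.
From mathcomp Require Import complex.

Set Implicit Arguments.
Unset Strict Implicit.
Unset Printing Implicit Defensive.

Import Order.TTheory GRing.Theory Num.Theory.
Local Open Scope ring_scope.
Local Open Scope fset_scope.
Local Open Scope fmap_scope.

(* Types are the elements of 'I_K (standing for [K] = {1,...,K}).      *)
(* Words of U are seq nat; the children of u are u1, u2, ... (rcons    *)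
(* u i with i >= 1, as in the paper's Ulam-Harris convention).          *)
(* A K-typed tree / forest is a finite map  word -> type, whose domain *)
(* is the vertex set and whose values are the types e(u).              *)

Definition labeled (K : nat) := {fmap seq nat -> 'I_K}.

Definition strict_prefix (u v : seq nat) := prefix u v && (u != v).

Definition is_tree (D : {fset seq nat}) : bool :=
  ([::] \in D) &&
  all (fun w => if w is _ :: _ then
                  let u := take (size w).-1 w in let i := last 0%N w in
                  [&& (0 < i)%N, u \in D & all (fun j => rcons u j \in D) (iota 1 i)]
                else true) (enum_fset D).

(* a forest with r components: every word is k u with 1 <= k <= r      *)
(* (the components themselves being trees is enforced by the laws)     *)
Definition is_forest (r : nat) (D : {fset seq nat}) : bool :=
  all (fun w => (0 < head 0%N w <= r)%N) (enum_fset D).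

Definition nchildren K (t : labeled K) (u : seq nat) : nat :=
  count (fun w => (size w == (size u).+1) && prefix u w) (enum_fset (domf t)).

Definition child_types K (t : labeled K) (u : seq nat) : seq 'I_K :=
  pmap (fun j => t.[? rcons u j]) (iota 1 (nchildren t u)).

Definition mkfmap K (s : seq (seq nat * 'I_K)) : labeled K :=
  foldr (fun kv m => m.[kv.1 <- kv.2]) [fmap] s.

Definition fringe K (f : labeled K) (u : seq nat) : labeled K :=
  mkfmap [seq (drop (size u) (val x), f x) | x <- enum (@predT (domf f)) & prefix u (val x)].

Definition prune K (f : labeled K) (u : seq nat) : labeled K :=
  f.[\ [fset w in domf f | strict_prefix u w]].

Section Laws.
Variables (R : realType) (K : nat).
Variable zeta : 'I_K -> seq 'I_K -> R.
Variable b : 'I_K -> R.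

Definition gw (i : 'I_K) (t : labeled K) : R :=
  if is_tree (domf t) && (t.[? [::]] == Some i)
  then \prod_(u : domf t) zeta (t u) (child_types t (val u))
  else 0.

Definition gwF (x : seq 'I_K) (f : labeled K) : R :=
  if is_forest (size x) (domf f)
  then \prod_(p <- zip (iota 1 (size x)) x) gw p.2 (fringe f [:: p.1])
  else 0.

Definition pdotb (w : seq 'I_K) : R := \sum_(y <- w) b y.

Definition hatzeta (i : 'I_K) (w : seq 'I_K) : R := pdotb w / b i * zeta i w.

(* hat P^(i),h ( ([tree]_{V_h}, V_h) = (t, v) ):                        *)
(* spine vertices u (strict ancestors of v) reproduce by hat zeta and    *)
(* choose the next spine vertex u l with prob. b_{w_l}/(p(w).b);         *)
(* other vertices (except the leaf v = V_h, whose subtree is pruned)     *)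
(* reproduce by zeta.                                                    *)
Definition hatP (i : 'I_K) (h : nat) (t : labeled K) (v : seq nat) : R :=
  if [&& is_tree (domf t), t.[? [::]] == Some i, v \in domf t, size v == h &
         all (fun w => ~~ strict_prefix v w) (enum_fset (domf t))]
  then \prod_(u : domf t | val u != v)
         (let w := child_types t (val u) in
          if strict_prefix (val u) v then
            hatzeta (t u) w *
            (match t.[? rcons (val u) (nth 0%N v (size (val u)))] with
             | Some e => b e | None => 0 end / pdotb w)
          else zeta (t u) w)
  else 0.

Definition hatPF (x : seq 'I_K) (j h : nat) (fv : labeled K * seq nat) : R :=
  let: (f, v) := fv in
  if is_forest (size x) (domf f) && (head 0%N v == j) && (v != [::])
  then \prod_(p <- zip (iota 1 (size x)) x)
         (if p.1 == j then hatP p.2 h (fringe f [:: j]) (behead v)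
          else gw p.2 (fringe f [:: p.1]))
  else 0.

Local Open Scope ereal_scope.

Definition Egw (i : 'I_K) (g : labeled K -> \bar R) : \bar R :=
  \esum_(t in [set: labeled K]) (gw i t)%:E * g t.

Definition EgwF (x : seq 'I_K) (g : labeled K -> \bar R) : \bar R :=
  \esum_(f in [set: labeled K]) (gwF x f)%:E * g f.

Definition EhatF (x : seq 'I_K) (j h : nat) (g : seq nat -> labeled K -> \bar R) : \bar R :=
  \esum_(fv in [set: labeled K * seq nat]) (hatPF x j h fv)%:E * g fv.2 fv.1.

Definition mean_entry (i j : 'I_K) : \bar R :=
  \esum_(w in [set: seq 'I_K]) (zeta i w * (count_mem j w)%:R)%:E.

Definition Qentry (i j k : 'I_K) : \bar R :=
  \esum_(w in [set: seq 'I_K])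
     (zeta i w * ((count_mem j w * count_mem k w)%:R
                  - (j == k)%:R * (count_mem j w)%:R))%:E.

End Laws.

Definition mean_matrix (R : realType) K (zeta : 'I_K -> seq 'I_K -> R) : 'M[R]_K :=
  \matrix_(i, j) fine (mean_entry zeta i j).

Definition irreducible_mx (R : realType) K (M : 'M[R]_K) : Prop :=
  forall i j : 'I_K, exists n : nat, 0 < (M ^+ n) i j.

Definition spectral_radius_one (R : realType) K (M : 'M[R]_K) : Prop :=
  let chi := char_poly (map_mx (fun x : R => (x%:C)%C) M) in
  (exists l : R[i], root chi l /\ `|l| = 1) /\
  (forall l : R[i], root chi l -> `|l| <= 1).

Definition hypH (R : realType) K (zeta : 'I_K -> seq 'I_K -> R) : Prop :=
  [/\ (forall i j k, Qentry zeta i j k < +oo)%E,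
      irreducible_mx (mean_matrix zeta),
      (exists i w, 0 < zeta i w /\ size w != 1%N) &
      spectral_radius_one (mean_matrix zeta)].

(* Main.v *)
Require Import Defs.
From HB Require Import structures.
From mathcomp Require Import all_boot all_order all_algebra.
From mathcomp Require Import finmap.
From mathcomp Require Import boolp classical_sets reals constructive_ereal ereal esum.
From mathcomp Require Import complex.
From mathcomp Require Import ring lra cardinality fsbigop.
Import Order.TTheory GRing.Theory Num.Theory.
Local Open Scope ring_scope.
Local Open Scope fmap_scope.

Set Implicit Arguments.
Unset Strict Implicit.
Unset Printing Implicit Defensive.

Lemma cat_inj (u : seq nat) : injective (cat u).
Proof. by move=> a c /eqP; rewrite eqseq_cat // eqxx => /eqP. Qed.

Lemma prefix_size (u w : seq nat) : prefix u w -> (size u <= size w)%N.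
Proof. by move=> /prefixP[s ->]; rewrite size_cat leq_addr. Qed.

Lemma prefix_rcons_inv (p u : seq nat) i :
  prefix p (rcons u i) = (p == rcons u i) || prefix p u.
Proof.
elim: u p => [|a u IH] [|c p] //.
- by rewrite /= orbF eqseq_cons; case: p => [|d p]; rewrite ?andbT ?andbF.
- by rewrite rcons_cons prefix_cons IH eqseq_cons andb_orr.
Qed.

Lemma strict_prefix_take (p u : seq nat) :
  strict_prefix p u -> p = take (size p) u /\ (size p < size u)%N.
Proof.
rewrite /strict_prefix => /andP[/prefixP[s ->] ne].
rewrite take_size_cat //; split => //.
rewrite size_cat -[X in (X < _)%N]addn0 ltn_add2l lt0n size_eq0.
by apply: contra ne => /eqP ->; rewrite cats0.
Qed.

Lemma prefix_take (k : nat) (u : seq nat) : prefix (take k u) u.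
Proof. by apply/prefixP; exists (drop k u); rewrite cat_take_drop. Qed.

Lemma prefix_cat_eq (u w s : seq nat) :
  prefix u s -> (drop (size u) s == w) = (s == u ++ w).
Proof.
move=> /prefixP[s' ->]; rewrite drop_size_cat //.
by apply/eqP/eqP => [->|/cat_inj ->].
Qed.

Lemma strict_prefix_cons (j : nat) u w :
  strict_prefix (j :: u) (j :: w) = strict_prefix u w.
Proof. by rewrite /strict_prefix prefix_cons eqxx eqseq_cons eqxx. Qed.

Lemma strict_prefixxx (u : seq nat) : strict_prefix u u = false.
Proof. by rewrite /strict_prefix eqxx andbF. Qed.

Lemma strict_prefix_rcons (u w : seq nat) i :
  strict_prefix u (rcons w i) = prefix u w.
Proof.
rewrite /strict_prefix prefix_rcons_inv.
case: (eqVneq u (rcons w i)) => [->|ne] /=.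
  apply/esym/negbTE/negP => /prefix_size.
  by rewrite size_rcons ltnn.
by rewrite andbT.
Qed.

Section Lookups.
Variable K : nat.
Implicit Types (f m t : labeled K).

Lemma mkfmap_get (s : seq (seq nat * 'I_K)) k :
  (mkfmap s).[? k] = ohead [seq kv.2 | kv <- s & kv.1 == k].
Proof.
elim: s => [|[k0 v0] s IH] /=; first by rewrite fnd_fmap0.
by rewrite fnd_set IH; case: (eqVneq k k0) => [->|ne]; rewrite ?eqxx // eq_sym (negbTE ne).
Qed.

Lemma mkfmap_map_get (T : Type) (s : seq T) (g : T -> seq nat) (h : T -> 'I_K) k :
  (mkfmap [seq (g x, h x) | x <- s]).[? k] = ohead [seq h x | x <- s & g x == k].
Proof.
elim: s => [|x s IH] /=; first by rewrite fnd_fmap0.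
by rewrite fnd_set IH; case: (eqVneq k (g x)) => [->|ne]; rewrite ?eqxx // eq_sym (negbTE ne).
Qed.

Lemma ohead_fnd m (s : seq (domf m)) (P : domf m -> bool) k0 :
  (forall x, (x \in s) && P x = (val x == k0)) ->
  ohead [seq m x | x <- s & P x] = m.[? k0].
Proof.
move=> HP.
case E: [seq x <- s | P x] => [|y s'] /=.
  case: fndP => // kf.
  have : [` kf]%fset \in [seq x <- s | P x].
    by rewrite mem_filter andbC HP /= eqxx.
  by rewrite E.
have : y \in [seq x <- s | P x] by rewrite E mem_head.
by rewrite mem_filter andbC HP => /eqP <-; rewrite Some_fnd.
Qed.

Lemma ohead_none m (s : seq (domf m)) (P : domf m -> bool) :
  (forall x, x \in s -> P x = false) ->
  ohead [seq m x | x <- s & P x] = None.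
Proof.
move=> HP; case E: [seq x <- s | P x] => [|y s'] //=.
have : y \in [seq x <- s | P x] by rewrite E mem_head.
by rewrite mem_filter => /andP[+ ys]; rewrite HP.
Qed.

Lemma fringe_get f u w : (fringe f u).[? w] = f.[? u ++ w].
Proof.
rewrite /fringe mkfmap_map_get; apply: ohead_fnd => y /=.
rewrite mem_filter mem_enum andbT; move: (val y) => s.
case: (boolP (prefix u s)) => pu /=; first by rewrite prefix_cat_eq.
apply/esym/negbTE; apply: contra pu => /eqP ->; exact: prefix_prefix.
Qed.

Lemma prune_get f u w :
  (prune f u).[? w] = if strict_prefix u w then None else f.[? w].
Proof.
rewrite /prune fnd_rem !inE; case: fndP => kf /=; rewrite ?kf //=.
by case: strict_prefix.
Qed.

Lemma in_domfE m w : (w \in domf m) = (m.[? w] != None).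
Proof. by case: fndP. Qed.

Lemma fmap_recon f v w :
  f.[? w] = if prefix v w then (fringe f v).[? drop (size v) w] else (prune f v).[? w].
Proof.
rewrite fringe_get prune_get; case: (boolP (prefix v w)) => pv.
  by move: pv => /prefixP[s ->]; rewrite drop_size_cat.
by rewrite /strict_prefix (negbTE pv).
Qed.

Definition glue f' (v : seq nat) t : labeled K :=
  mkfmap ([seq (v ++ val x, t x) | x <- enum (@predT (domf t))] ++
          [seq (val x, f' x) | x <- enum (@predT (domf f')) & ~~ prefix v (val x)]).

Lemma ohead_cat (T : Type) (s1 s2 : seq T) :
  ohead (s1 ++ s2) = if ohead s1 is Some a then Some a else ohead s2.
Proof. by case: s1. Qed.

Lemma glue_get f' v t w :
  (glue f' v t).[? w] = if prefix v w then t.[? drop (size v) w] else f'.[? w].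
Proof.
rewrite /glue mkfmap_get filter_cat map_cat ohead_cat.
rewrite -!mkfmap_get !mkfmap_map_get.
case: (boolP (prefix v w)) => pv.
  rewrite (@ohead_fnd t _ _ (drop (size v) w)); last first.
    move=> y /=; rewrite mem_enum /=; case/prefixP: (pv) => w' ->.
    by rewrite drop_size_cat //; apply/eqP/eqP => [/cat_inj|->].
  case: (t.[? _]) => // /=.
  apply: ohead_none => y; rewrite mem_filter => /andP[py _]; apply/negbTE.
  by apply: contra py => /eqP ->.
rewrite (@ohead_none t); last first.
  by move=> y _ /=; apply/negbTE; apply: contra pv => /eqP <-; rewrite prefix_prefix.
apply: ohead_fnd => y /=; rewrite mem_filter mem_enum andbT.
by case: (eqVneq (val y) w) => [->|]; rewrite ?pv ?andbF ?andbT.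
Qed.

End Lookups.

Definition tree_ok (D : {fset seq nat}) :=
  [::] \in D /\ forall u i, rcons u i \in D ->
    [/\ (0 < i)%N, u \in D & forall j, (0 < j <= i)%N -> rcons u j \in D].

Lemma take_rcons_size (u : seq nat) i : take (size (rcons u i)).-1 (rcons u i) = u.
Proof. by rewrite size_rcons /= -cats1 take_size_cat. Qed.

Lemma is_treeP D : is_tree D <-> tree_ok D.
Proof.
rewrite /is_tree; split.
- move=> /andP[r0 /allP H]; split=> // u i ui.
  have := H _ ui; case E: (rcons u i) => [|a w]; first by move/(congr1 size): E; rewrite size_rcons.
  rewrite -E take_rcons_size last_rcons => /and3P[i0 uD /allP sib].
  split=> // j /andP[j0 ji]; apply: sib; rewrite mem_iota j0 /=.
  by rewrite add1n ltnS.
- move=> [r0 H]; rewrite r0 /=; apply/allP => w.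
  case/lastP: w => [|u i] // wD.
  case E': (rcons u i) => [|a w']; first by move/(congr1 size): E'; rewrite size_rcons.
  rewrite -E' take_rcons_size last_rcons.
  have [i0 uD sib] := H u i wD.
  rewrite i0 uD /=; apply/allP => j; rewrite mem_iota add1n ltnS => /sib.
  by [].
Qed.

Section TreeLemmas.
Variable K : nat.
Implicit Types (f m t T : labeled K).

Lemma mem_prune T u w :
  (w \in domf (prune T u)) = ~~ strict_prefix u w && (w \in domf T).
Proof. by rewrite !in_domfE prune_get; case: strict_prefix. Qed.

Lemma mem_fringe T u w : (w \in domf (fringe T u)) = (u ++ w \in domf T).
Proof. by rewrite !in_domfE fringe_get. Qed.

Lemma mem_glue f' v t w :
  (w \in domf (glue f' v t)) =
    if prefix v w then drop (size v) w \in domf t else w \in domf f'.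
Proof. by rewrite !in_domfE glue_get; case: prefix. Qed.

Lemma tree_prefix (D : {fset seq nat}) w p :
  tree_ok D -> w \in D -> prefix p w -> p \in D.
Proof.
move=> [r0 H]; elim/last_ind: w p => [|u i IH] p.
  by move=> _; rewrite prefixs0 => /eqP ->.
move=> uiD; rewrite prefix_rcons_inv => /orP[/eqP -> //|pu].
by have [_ uD _] := H _ _ uiD; apply: IH.
Qed.

Lemma strict_prefix_nil (u : seq nat) : strict_prefix u [::] = false.
Proof. by rewrite /strict_prefix prefixs0; case: eqP. Qed.

Lemma prune_tree T u : tree_ok (domf T) -> tree_ok (domf (prune T u)).
Proof.
move=> [r0 H]; split; first by rewrite mem_prune strict_prefix_nil.
move=> w i; rewrite mem_prune strict_prefix_rcons => /andP[npu wiD].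
have [i0 wD sib] := H _ _ wiD; split=> //.
  rewrite mem_prune wD andbT; apply: contra npu => /andP[] //.
by move=> j /sib jD; rewrite mem_prune strict_prefix_rcons npu.
Qed.

Lemma fringe_tree T u : tree_ok (domf T) -> u \in domf T ->
  tree_ok (domf (fringe T u)).
Proof.
move=> [r0 H] uD; split; first by rewrite mem_fringe cats0.
move=> w i; rewrite mem_fringe -rcons_cat => wiD.
have [i0 wD sib] := H _ _ wiD; split=> //; first by rewrite mem_fringe.
by move=> j /sib jD; rewrite mem_fringe -rcons_cat.
Qed.

Lemma glue_tree T u : tree_ok (domf (prune T u)) -> tree_ok (domf (fringe T u)) ->
  tree_ok (domf T).
Proof.
move=> [r0 HP] [f0 HF].
have sub w : w \in domf (prune T u) -> w \in domf T by rewrite mem_prune => /andP[].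
split; first exact: sub.
move=> w i wiD.
have lift : rcons w i \in domf (prune T u) ->
    [/\ (0 < i)%N, w \in domf T & forall j, (0 < j <= i)%N -> rcons w j \in domf T].
  by move=> /HP[i0 wD sib]; split=> //; [exact: sub|move=> j /sib/sub].
case: (boolP (prefix u (rcons w i))) => pu; last first.
  by apply: lift; rewrite mem_prune wiD andbT; apply: contra pu => /andP[].
case/prefixP: (pu) => y E.
case/lastP: y E => [|y' i'] E.
  by apply: lift; rewrite mem_prune wiD andbT E cats0 strict_prefixxx.
move: (E); rewrite -rcons_cat => /eqP; rewrite eqseq_rcons => /andP[/eqP Ew /eqP Ei].
have : rcons y' i' \in domf (fringe T u) by rewrite mem_fringe -E.
move=> /HF[i0 yD sib]; rewrite Ei Ew; split=> //; first by rewrite -mem_fringe.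
by move=> j /sib; rewrite mem_fringe rcons_cat.
Qed.

End TreeLemmas.

Lemma count_eq_mem (T : eqType) (P : pred T) (s1 s2 : seq T) :
  uniq s1 -> uniq s2 -> (forall y, P y -> (y \in s1) = (y \in s2)) ->
  count P s1 = count P s2.
Proof.
move=> u1 u2 H; rewrite -!size_filter; apply: perm_size.
apply: uniq_perm; rewrite ?filter_uniq // => y; rewrite !mem_filter.
by case Py: (P y) => //=; apply: H.
Qed.

Lemma child_shape (w y : seq nat) :
  (size y == (size w).+1) && prefix w y -> exists j, y = rcons w j.
Proof.
move=> /andP[/eqP sz /prefixP[s E]]; move: sz; rewrite E size_cat -addn1.
move/eqP; rewrite eqn_add2l.
by case: s E => [|j [|? ?]] E //= _; exists j; rewrite cats1.
Qed.

Section ChildTypes.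
Variable K : nat.
Implicit Types (f m t T : labeled K).

Lemma ct_prune T u w : ~~ prefix u w -> child_types (prune T u) w = child_types T w.
Proof.
move=> npu; rewrite /child_types.
have -> : nchildren (prune T u) w = nchildren T w.
  rewrite /nchildren; apply: count_eq_mem; rewrite ?fset_uniq // => y /child_shape[j ->].
  by rewrite -[_ \in enum_fset _]/(_ \in domf _) mem_prune strict_prefix_rcons (negbTE npu).
by apply: eq_pmap => j; rewrite prune_get strict_prefix_rcons (negbTE npu).
Qed.

Lemma ct_fringe T u w : child_types (fringe T u) w = child_types T (u ++ w).
Proof.
rewrite /child_types.
have -> : nchildren (fringe T u) w = nchildren T (u ++ w).
  rewrite /nchildren.
  set Puw := fun y : seq nat => (size y == (size (u ++ w)).+1) && prefix (u ++ w) y.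
  transitivity (count Puw (map (cat u) (enum_fset (domf (fringe T u))))).
    rewrite count_map; apply: eq_count => y /=.
    by rewrite /Puw !size_cat -addnS eqn_add2l prefix_catr // eqxx.
  apply: count_eq_mem; rewrite ?fset_uniq ?(map_inj_uniq (@cat_inj u)) ?fset_uniq //.
  move=> y /andP[_ /catl_prefix /prefixP[y' ->]].
  rewrite (mem_map (@cat_inj u)).
  by rewrite -[_ \in enum_fset _]/(_ \in domf _) -[_ \in enum_fset (domf T)]/(_ \in domf T) mem_fringe.
by apply: eq_pmap => j; rewrite fringe_get rcons_cat.
Qed.

End ChildTypes.

Lemma telescope (R : realType) (g : nat -> R) n :
  (forall k, (k <= n)%N -> g k != 0) ->
  \prod_(k <- iota 0 n) (g k.+1 / g k) = g n / g 0%N.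
Proof.
elim: n => [|n IH] H; first by rewrite big_nil divff // H.
have -> : iota 0 n.+1 = index_iota 0 n.+1 by rewrite /index_iota subn0.
rewrite big_nat_recr //= -[index_iota 0 n]/(iota 0 (n - 0)) subn0 IH; last first.
  by move=> k kn; apply: H; rewrite (leq_trans kn).
have h0 := H 0%N (leq0n _); have hn := H n (leqnSn _).
by field; rewrite h0 hn.
Qed.

Section TreeKey.
Variables (R : realType) (K : nat) (zeta : 'I_K -> seq 'I_K -> R) (b : 'I_K -> R).
Hypothesis b_pos : forall i, 0 < b i.
Implicit Types (f m t T : labeled K).

Definition Zf m w : R :=
  match m.[? w] with Some y => zeta y (child_types m w) | None => 1 end.

Definition Hf m (v w : seq nat) : R :=
  match m.[? w] with
  | Some y =>
    let c := child_types m w in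
    if strict_prefix w v then
      hatzeta zeta b y c *
      (match m.[? rcons w (nth 0%N v (size w))] with Some e => b e | None => 0 end / pdotb b c)
    else zeta y c
  | None => 1 end.

Lemma gw_prod m :
  \prod_(x : domf m) zeta (m x) (child_types m (val x)) = \prod_(w <- enum_fset (domf m)) Zf m w.
Proof.
by rewrite big_seq_fsetE /=; apply: eq_bigr => x _; rewrite /Zf -Some_fnd.
Qed.

Lemma hatP_prod m v :
  \prod_(x : domf m | val x != v)
     (let w := child_types m (val x) in
      if strict_prefix (val x) v then
        hatzeta zeta b (m x) w *
        (match m.[? rcons (val x) (nth 0%N v (size (val x)))] with
         | Some e => b e | None => 0 end / pdotb b w)
      else zeta (m x) w)
  = \prod_(w <- enum_fset (domf m) | w != v) Hf m v w.
Proof.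
by rewrite big_seq_fsetE /=; apply: eq_bigr => x _; rewrite /Hf -Some_fnd.
Qed.

Lemma pdotb_pos m w l :
  tree_ok (domf m) -> rcons w l \in domf m -> 0 < pdotb b (child_types m w).
Proof.
move=> [_ H] /H[l0 _ sib].
have w1 : rcons w 1 \in domf m by apply: sib; rewrite l0.
have : (0 < nchildren m w)%N.
  rewrite /nchildren -has_count; apply/hasP; exists (rcons w 1) => //.
  by rewrite size_rcons eqxx prefix_rcons.
rewrite /child_types; case: (nchildren m w) => // n _.
rewrite /= ; move: w1; rewrite in_domfE; case: (m.[? rcons w 1]) => // y _ /=.
rewrite /pdotb big_cons; apply: (lt_le_trans (b_pos y)).
by rewrite lerDl sumr_ge0 // => z _; apply: ltW.
Qed.


Definition beta T w : R := match T.[? w] with Some y => b y | None => 0 end.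

Lemma spine_next (w u : seq nat) :
  strict_prefix w u -> rcons w (nth 0%N u (size w)) = take (size w).+1 u.
Proof.
move=> /strict_prefix_take[E lt]; rewrite (take_nth 0%N) //.
by rewrite -E.
Qed.

Lemma beta_pos T w : w \in domf T -> 0 < beta T w.
Proof. by rewrite /beta in_domfE; case: (T.[? w]). Qed.

Lemma perm_dom T u :
  u \in domf T ->
  perm_eq (enum_fset (domf T))
    ([seq w <- enum_fset (domf (prune T u)) | w != u] ++
     map (cat u) (enum_fset (domf (fringe T u)))).
Proof.
move=> uT; apply: uniq_perm; first exact: fset_uniq.
  rewrite cat_uniq filter_uniq ?fset_uniq ?(map_inj_uniq (@cat_inj u)) ?fset_uniq // andbT.
  apply/hasPn => w /mapP[y _ ->]; rewrite mem_filter.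
  rewrite -[_ \in enum_fset _]/(_ \in domf _) mem_prune.
  case: (eqVneq y [::]) => [->|yn]; first by rewrite cats0 eqxx.
  rewrite /strict_prefix prefix_prefix /=.
  have -> : (u != u ++ y) by apply: contra yn => /eqP E; apply/eqP/(@cat_inj u); rewrite cats0 -E.
  by rewrite andbF.
move=> w; rewrite mem_cat mem_filter.
rewrite -![_ \in enum_fset _]/(_ \in domf _) mem_prune.
case: (boolP (prefix u w)) => pu.
  case/prefixP: pu => y ->; rewrite (mem_map (@cat_inj u)).
  rewrite -[_ \in enum_fset _]/(_ \in domf _) mem_fringe.
  by apply/idP/idP => [->|/orP[/and3P[_ _ ->]|->]]; rewrite ?orbT.
have -> : strict_prefix u w = false by rewrite /strict_prefix (negbTE pu).
have -> : (w != u) by apply: contra pu => /eqP ->; exact: prefix_refl.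
have -> : (w \in map (cat u) (enum_fset (domf (fringe T u)))) = false.
  by apply/negbTE/mapP => -[y _ E]; move: pu; rewrite E prefix_prefix.
by rewrite orbF.
Qed.

Lemma perm_spine T u :
  tree_ok (domf T) -> u \in domf T ->
  perm_eq [seq w <- enum_fset (domf (prune T u)) | strict_prefix w u]
          (map (fun k => take k u) (iota 0 (size u))).
Proof.
move=> trT uT; apply: uniq_perm; rewrite ?filter_uniq ?fset_uniq //.
  rewrite map_inj_in_uniq ?iota_uniq // => k k'; rewrite !mem_iota !add0n => /andP[_ ku] /andP[_ k'u] E.
  by have := congr1 size E; rewrite !size_takel // ltnW.
move=> w; rewrite mem_filter -[_ \in enum_fset _]/(_ \in domf _) mem_prune.
apply/idP/mapP.
  move=> /and3P[spw _ _]; have [E lt] := strict_prefix_take spw.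
  by exists (size w) => //; rewrite mem_iota.
move=> [k]; rewrite mem_iota add0n => /andP[_ ku] ->.
have sk : size (take k u) = k by rewrite size_takel // ltnW.
have sp : strict_prefix (take k u) u.
  rewrite /strict_prefix prefix_take andTb; apply/eqP => E.
  by move: (congr1 size E); rewrite sk => E'; move: ku; rewrite -E' ltnn.
rewrite sp andTb (tree_prefix trT uT (prefix_take k u)) andbT.
apply/negP => /strict_prefix_take[_]; rewrite sk => lt.
by move: (ltn_trans lt ku); rewrite ltnn.
Qed.

Lemma take_not_strict (u : seq nat) n : strict_prefix u (take n u) = false.
Proof.
apply/negP => /strict_prefix_take[_ lt].
by have := prefix_size (prefix_take n u); rewrite leqNgt lt.
Qed.

Lemma tree_key T u e i : T.[? u] = Some e ->
  gw zeta i T * b e = b i * hatP zeta b i (size u) (prune T u) u * gw zeta e (fringe T u).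
Proof.
move=> Tu.
have uT : u \in domf T by rewrite in_domfE Tu.
have F0 : (fringe T u).[? [::]] = Some e by rewrite fringe_get cats0.
have T'0 : (prune T u).[? [::]] = T.[? [::]] by rewrite prune_get strict_prefix_nil.
have uT' : u \in domf (prune T u) by rewrite mem_prune strict_prefixxx.
have nodesc : all (fun w => ~~ strict_prefix u w) (enum_fset (domf (prune T u))).
  by apply/allP => w; rewrite -[_ \in enum_fset _]/(_ \in domf _) mem_prune => /andP[].
rewrite /gw /hatP T'0 F0 uT' nodesc eqxx !andbT.
case: (boolP (is_tree (domf T))) => trT; last first.
  rewrite /= mul0r.
  case: (boolP (is_tree (domf (prune T u)))) => trT' /=; last by rewrite mulr0 mul0r.
  case: (boolP (is_tree (domf (fringe T u)))) => trF /=; last by rewrite mulr0.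
  exfalso; move/negP: trT; apply; apply/is_treeP.
  by apply: (@glue_tree _ T u); apply/is_treeP.
have trTo : tree_ok (domf T) by apply/is_treeP.
have trT'o : tree_ok (domf (prune T u)) by apply: prune_tree.
have trT' : is_tree (domf (prune T u)) by apply/is_treeP.
have trF : is_tree (domf (fringe T u)) by apply/is_treeP; apply: fringe_tree.
rewrite trT' trF /=.
case: (eqVneq T.[? [::]] (Some i)) => Ti; last by rewrite !mul0r mulr0 mul0r.
rewrite !gw_prod hatP_prod (perm_big _ (perm_dom uT)) big_cat /= big_filter big_map.
have eF : \prod_(w <- enum_fset (domf (fringe T u))) Zf T (u ++ w) =
          \prod_(w <- enum_fset (domf (fringe T u))) Zf (fringe T u) w.
  by apply: eq_bigr => w _; rewrite /Zf fringe_get ct_fringe.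
pose c := fun w => if strict_prefix w u
           then beta T (rcons w (nth 0%N u (size w))) / beta T w else 1.
have eH : \prod_(w <- enum_fset (domf (prune T u)) | w != u) Hf (prune T u) u w =
          \prod_(w <- enum_fset (domf (prune T u)) | w != u) (Zf T w * c w).
  rewrite big_seq_cond [RHS]big_seq_cond; apply: eq_bigr => w /andP[wT' wu].
  move: (wT'); rewrite -[_ \in enum_fset _]/(_ \in domf _) mem_prune => /andP[nsp wT].
  have npu : ~~ prefix u w.
    by apply: contra nsp => pu; rewrite /strict_prefix pu eq_sym.
  rewrite /Hf /Zf /c /beta prune_get (negbTE nsp) ct_prune //.
  move: wT; rewrite in_domfE; case: (T.[? w]) => [y|] // _.
  case: (boolP (strict_prefix w u)) => spw; last by rewrite mulr1.
  rewrite prune_get spine_next // take_not_strict.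
  have nT' : take (size w).+1 u \in domf (prune T u).
    by rewrite mem_prune take_not_strict (tree_prefix trTo uT (prefix_take _ u)).
  rewrite -spine_next // in nT'.
  have pd := pdotb_pos trT'o nT'.
  rewrite ct_prune // in pd.
  rewrite /hatzeta; have by0 := b_pos y.
  move: (pdotb b _) pd => p pd; move: (zeta y _) => z.
  case: (T.[? _]) => [e0|]; last by rewrite !mul0r !mulr0.
  by field; rewrite (gt_eqF pd) (gt_eqF by0).
rewrite eH big_split /= eF.
have tel : \prod_(w <- enum_fset (domf (prune T u)) | w != u) c w = b e / b i.
  transitivity (\prod_(w <- enum_fset (domf (prune T u)) | strict_prefix w u)
                  (beta T (rcons w (nth 0%N u (size w))) / beta T w)).
    rewrite big_mkcond [RHS]big_mkcond; apply: eq_bigr => w _ /=.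
    by rewrite /c; case: (eqVneq w u) => [->|]; rewrite ?strict_prefixxx.
  rewrite -big_filter (perm_big _ (perm_spine trTo uT)) big_map.
  transitivity (\prod_(k <- iota 0 (size u)) (beta T (take k.+1 u) / beta T (take k u))).
    rewrite big_seq [RHS]big_seq; apply: eq_bigr => k; rewrite mem_iota add0n => /andP[_ ku].
    have sk : size (take k u) = k by rewrite size_takel // ltnW.
    have sp : strict_prefix (take k u) u.
      rewrite /strict_prefix prefix_take andTb; apply/eqP => E.
      by move: (congr1 size E); rewrite sk => E'; move: ku; rewrite -E' ltnn.
    by rewrite spine_next // sk.
  rewrite telescope; last first.
    by move=> k _; apply/lt0r_neq0/beta_pos/(tree_prefix trTo uT (prefix_take k u)).
  by rewrite take_size take0 /beta Tu Ti.
rewrite tel eqxx; have bi0 := b_pos i.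
move: (\prod_(_ <- _ | _) _) (\prod_(_ <- _) _) => P1 P2.
by field; rewrite (gt_eqF bi0).
Qed.

End TreeKey.

Section ForestKey.
Variables (R : realType) (K : nat) (zeta : 'I_K -> seq 'I_K -> R) (b : 'I_K -> R).
Hypothesis b_pos : forall i, 0 < b i.
Implicit Types (f m t T : labeled K).

Lemma forest_prune r f v : v \in domf f ->
  is_forest r (domf (prune f v)) = is_forest r (domf f).
Proof.
move=> vf; rewrite /is_forest; apply/allP/allP => H w.
  rewrite -![_ \in enum_fset _]/(_ \in domf _) => wf.
  case: (boolP (strict_prefix v w)) => sp; last by apply: H; rewrite mem_prune sp.
  have := H v; rewrite -![_ \in enum_fset _]/(_ \in domf _) mem_prune strict_prefixxx vf.
  move=> /(_ isT); move: sp => /andP[/prefixP[s ->] _].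
  by case: v {vf H} => [|a v'].
rewrite -![_ \in enum_fset _]/(_ \in domf _) mem_prune => /andP[_]; exact: H.
Qed.

Lemma fringe_prune_other f j v' k : k != j ->
  fringe (prune f (j :: v')) [:: k] = fringe f [:: k].
Proof.
move=> kj; apply/fmapP => w; rewrite !fringe_get prune_get /= /strict_prefix.
by rewrite prefix_cons eq_sym (negbTE kj).
Qed.

Lemma fringe_prune_same f j v' :
  fringe (prune f (j :: v')) [:: j] = prune (fringe f [:: j]) v'.
Proof.
by apply/fmapP => w; rewrite fringe_get !prune_get fringe_get /= strict_prefix_cons.
Qed.

Lemma fringe_fringe f j v' : fringe (fringe f [:: j]) v' = fringe f (j :: v').
Proof. by apply/fmapP => w; rewrite !fringe_get. Qed.

Lemma zip_iota_mem (x : seq 'I_K) (e : 'I_K) j :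
  (0 < j <= size x)%N -> (j, nth e x j.-1) \in zip (iota 1 (size x)) x.
Proof.
move=> /andP[j0 jr].
have jl : (j.-1 < size x)%N by rewrite prednK.
have -> : (j, nth e x j.-1) = nth (0%N, e) (zip (iota 1 (size x)) x) j.-1.
  by rewrite nth_zip ?size_iota // nth_iota // add1n prednK.
by apply: mem_nth; rewrite size_zip size_iota minnn.
Qed.

Lemma zip_iota_uniq (x : seq 'I_K) : uniq (zip (iota 1 (size x)) x).
Proof.
apply: (@map_uniq _ _ fst).
by rewrite -/(unzip1 _) unzip1_zip ?size_iota // iota_uniq.
Qed.

Lemma zip_iota_one (x : seq 'I_K) (e : 'I_K) p :
  p \in zip (iota 1 (size x)) x -> p = (p.1, nth e x p.1.-1).
Proof.
move=> pin; case: (nthP (0%N, e) pin) => i; rewrite size_zip size_iota minnn => il <-.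
by rewrite nth_zip ?size_iota // nth_iota //= add1n.
Qed.

Lemma forest_key x f v e : f.[? v] = Some e ->
  gwF zeta x f * b e =
  \sum_(p <- zip (iota 1 (size x)) x)
     b p.2 * hatPF zeta b x p.1 (size v).-1 (prune f v, v) * gw zeta e (fringe f v).
Proof.
move=> fv; have vf : v \in domf f by rewrite in_domfE fv.
rewrite /gwF /hatPF forest_prune //.
case: (boolP (is_forest (size x) (domf f))) => hf; last first.
  by rewrite mul0r; apply/esym/big1 => p _; rewrite /= mulr0 mul0r.
have := allP hf v vf; case: v fv vf => [|j v'] fv vf //= jr.
set s := zip (iota 1 (size x)) x.
have js := zip_iota_mem e jr.
have us : uniq s := zip_iota_uniq x.
rewrite (bigD1_seq _ js us) [RHS](bigD1_seq _ js us) /= eqxx /=.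
rewrite [X in _ = _ + X]big1_seq; last first.
  move=> p /andP[pn ps]; rewrite eq_sym.
  have -> : (p.1 == j) = false.
    apply/negbTE; apply: contra pn => /eqP E.
    by rewrite (zip_iota_one e ps) E.
  by rewrite mulr0 mul0r.
rewrite addr0 (bigD1_seq _ js us) /= eqxx.
have -> : \prod_(p <- s | p != (j, nth e x j.-1))
            (if p.1 == j then hatP zeta b p.2 (size v') (fringe (prune f (j :: v')) [:: j]) v'
             else gw zeta p.2 (fringe (prune f (j :: v')) [:: p.1]))
        = \prod_(p <- s | p != (j, nth e x j.-1)) gw zeta p.2 (fringe f [:: p.1]).
  rewrite big_seq_cond [RHS]big_seq_cond; apply: eq_bigr => p /andP[ps pn].
  have pj : (p.1 == j) = false.
    apply/negbTE; apply: contra pn => /eqP E.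
    by rewrite (zip_iota_one e ps) E.
  by rewrite pj fringe_prune_other // pj.
rewrite fringe_prune_same -(fringe_fringe f j v').
have Tu : (fringe f [:: j]).[? v'] = Some e by rewrite fringe_get.
have := tree_key zeta b_pos (nth e x j.-1) Tu.
move: (gw zeta _ (fringe f [:: j])) (hatP _ _ _ _ _ _) (gw zeta e _) (\prod_(_ <- _ | _) _) => A B C D E.
rewrite mulrAC E; ring.
Qed.

End ForestKey.

Section EsumLemmas.
Local Open Scope ereal_scope.
Variables (R : realType) (T : choiceType).

Lemma esum_ge_one (S : set T) (a : T -> \bar R) i :
  S i -> (a i <= \esum_(j in S) a j)%E.
Proof.
move=> Si; apply: esum_ge; exists [set i]%classic; last by rewrite fsbig_set1.
by split; [exact: finite_set1| move=> j ->].
Qed.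

Lemma esumZl (S : set T) (c : \bar R) (a : T -> \bar R) :
  (0 <= c)%E -> (forall i, 0 <= a i)%E ->
  (c * \esum_(i in S) a i)%E = (\esum_(i in S) (c * a i)%E)%E.
Proof.
move=> c0 a0.
move: c0; case: c => [r| |] //.
  rewrite lee_fin le0r => /orP[/eqP ->|r0].
    by rewrite mul0e esum1 // => i _; rewrite mul0e.
  rewrite /esum -ereal_sup_pZl //; congr ereal_sup; apply/seteqP; split => y /=.
    by move=> [_ [X HX <-] <-]; exists X => //; rewrite ge0_mule_fsumr.
  by move=> [X HX <-]; exists (\sum_(i \in X) a i); [exists X|rewrite ge0_mule_fsumr].
move=> _.
case: (eqVneq (\esum_(i in S) a i) 0) => h.
  rewrite h mule0; apply/esym/esum1 => i Si.
  have ai := @esum_ge_one S a i Si; rewrite h in ai.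
  have -> : a i = 0%E by apply/eqP; rewrite eq_le ai a0.
  by rewrite mule0.
have hp : 0 < \esum_(i in S) a i by rewrite lt0e h esum_ge0.
rewrite gt0_mulye //.
have [i Si ai] : exists2 i, S i & 0 < a i.
  apply: contrapT => H; move/eqP: h; apply; apply: esum1 => i Si.
  apply/eqP; rewrite eq_le a0 andbT leNgt; apply/negP => ai; apply: H.
  by exists i.
apply/esym/eqP; rewrite -leye_eq.
by have := @esum_ge_one S (fun i => (+oo * a i)%E) i Si; rewrite /= gt0_mulye.
Qed.

End EsumLemmas.

Arguments hatPF : simpl never.
Arguments prune : simpl never.
Arguments fringe : simpl never.
Arguments gw : simpl never.
Arguments gwF : simpl never.
Arguments hatP : simpl never.
Arguments glue : simpl never.

Section Main.
Variables (R : realType) (K : nat) (zeta : 'I_K -> seq 'I_K -> R) (b : 'I_K -> R).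
Hypothesis b_pos : forall i, 0 < b i.
Hypothesis zeta_ge0 : forall i w, 0 <= zeta i w.
Variable x : seq 'I_K.
Variables (G1 : seq nat -> labeled K -> \bar R) (G2 : labeled K -> \bar R).
Hypothesis G1_ge0 : forall v f, (0 <= G1 v f)%E.
Hypothesis G2_ge0 : forall t, (0 <= G2 t)%E.

Lemma gw_ge0 i t : 0 <= gw zeta i t.
Proof. by rewrite /gw; case: ifP => _ //; apply: prodr_ge0 => *; exact: zeta_ge0. Qed.

Lemma gwF_ge0 f : 0 <= gwF zeta x f.
Proof. by rewrite /gwF; case: ifP => _ //; apply: prodr_ge0 => *; exact: gw_ge0. Qed.

Lemma pdotb_ge0 w : 0 <= pdotb b w.
Proof. by apply: sumr_ge0 => i _; exact: ltW. Qed.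

Lemma hatzeta_ge0 i w : 0 <= hatzeta zeta b i w.
Proof.
by rewrite /hatzeta; apply: mulr_ge0 => //; apply: divr_ge0; [exact: pdotb_ge0|exact: ltW].
Qed.

Lemma hatP_ge0 i h t v : 0 <= hatP zeta b i h t v.
Proof.
rewrite /hatP; case: ifP => _ //; apply: prodr_ge0 => u _ /=.
case: ifP => _ //; apply: mulr_ge0; first exact: hatzeta_ge0.
apply: divr_ge0; last exact: pdotb_ge0.
by case: (t.[? _]) => // e; exact: ltW.
Qed.

Lemma hatPF_ge0 j h fv : 0 <= hatPF zeta b x j h fv.
Proof.
case: fv => f v; rewrite /hatPF; case: ifP => _ //; apply: prodr_ge0 => p _.
by case: ifP => _; [exact: hatP_ge0|exact: gw_ge0].
Qed.

Definition Tf (p : nat * 'I_K) (z : nat * ((labeled K * seq nat) * labeled K)) : \bar R :=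
  match z.2.1.1.[? z.2.1.2] with
  | Some e => ((b p.2 * hatPF zeta b x p.1 z.1 z.2.1 * gw zeta e z.2.2 / b e)%:E *
               (G1 z.2.1.2 z.2.1.1 * G2 z.2.2))%E
  | None => 0%E end.

Lemma Tf_ge0 p z : (0 <= Tf p z)%E.
Proof.
rewrite /Tf; case: (_.[? _]) => // e; apply: mule_ge0; last exact: mule_ge0.
rewrite lee_fin; apply: divr_ge0; last exact: ltW.
by apply: mulr_ge0; [apply: mulr_ge0; [exact: ltW|exact: hatPF_ge0]|exact: gw_ge0].
Qed.

Definition U z : \bar R := (\sum_(p <- zip (iota 1 (size x)) x) Tf p z)%E.

Definition phi (fv : labeled K * seq nat) : nat * ((labeled K * seq nat) * labeled K) :=
  ((size fv.2).-1, ((prune fv.1 fv.2, fv.2), fringe fv.1 fv.2)).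

Lemma phi_inj : forall k1 k2, phi k1 = phi k2 -> k1 = k2.
Proof.
move=> [f1 v1] [f2 v2] E.
have E2 : v1 = v2 := congr1 (fun z => z.2.1.2) E.
have E1 : prune f1 v1 = prune f2 v2 := congr1 (fun z => z.2.1.1) E.
have E3 : fringe f1 v1 = fringe f2 v2 := congr1 (fun z => z.2.2) E.
subst v2.
suff -> : f1 = f2 by []. 
apply/fmapP => w.
by rewrite (fmap_recon f1 v1) (fmap_recon f2 v1) E1 E3.
Qed.

Lemma U_phi f v : v \in domf f ->
  U (phi (f, v)) = ((gwF zeta x f)%:E * (G1 v (prune f v) * G2 (fringe f v)))%E.
Proof.
rewrite in_domfE; case E: (f.[? v]) => [e|] // _.
rewrite /U /Tf /phi /= prune_get strict_prefixxx E.
rewrite -ge0_sume_distrl; last first.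
  move=> p _; rewrite lee_fin; apply: divr_ge0; last exact: ltW.
  by apply: mulr_ge0; [apply: mulr_ge0; [exact: ltW|exact: hatPF_ge0]|exact: gw_ge0].
rewrite sumEFin -mulr_suml -(forest_key zeta b_pos x E).
by rewrite mulfK // gt_eqF.
Qed.


Lemma U_support z : U z != 0%E -> exists2 k, k.2 \in domf k.1 & z = phi k.
Proof.
move: z => [h [[f' v] t]] Uz.
have [p ps Tp] : exists2 p, p \in zip (iota 1 (size x)) x & Tf p (h, ((f', v), t)) != 0%E.
  apply: contrapT => H; move/eqP: Uz; apply; rewrite /U; apply: big1_seq => p /andP[_ ps].
  by case: (eqVneq (Tf p (h, (f', v, t))) 0%E) => // np; exfalso; apply: H; exists p.
move: Tp; rewrite /Tf /=.
case E: (f'.[? v]) => [e|]; last by rewrite eqxx.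
move=> Tp.
have c0 : b p.2 * hatPF zeta b x p.1 h (f', v) * gw zeta e t / b e != 0.
  by apply: contra Tp => /eqP ->; rewrite mul0e.
have hp : hatPF zeta b x p.1 h (f', v) != 0.
  by apply: contra c0 => /eqP ->; rewrite mulr0 !mul0r.
have gt : gw zeta e t != 0 by apply: contra c0 => /eqP ->; rewrite mulr0 mul0r.
move: hp; rewrite /hatPF /=; case: ifP => [/andP[/andP[hf /eqP hv] vn]|]; last by rewrite eqxx.
clear Uz Tp c0; case: v E hv vn => [|j v'] E hv vn //=; rewrite /= in hv; subst j.
move=> hprod.
have hP : hatP zeta b p.2 h (fringe f' [:: p.1]) v' != 0.
  apply: contra hprod => /eqP H0; rewrite prodf_seq_eq0; apply/hasP; exists p => //.
  rewrite andTb eqxx; apply/eqP; exact: H0.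
move: hP; rewrite /hatP; case: ifP => [/and5P[_ _ _ /eqP sz nd]|]; last by rewrite eqxx.
move=> _.
move: gt; rewrite /gw; case: ifP => [/andP[_ /eqP t0]|]; last by rewrite eqxx.
move=> _.
set v := p.1 :: v'.
exists (glue f' v t, v).
  by rewrite /= in_domfE glue_get prefix_refl drop_size t0.
have P1 : prune (glue f' v t) v = f'.
  apply/fmapP => w; rewrite prune_get glue_get.
  case: (boolP (strict_prefix v w)) => sp.
    case Ew: (f'.[? w]) => [y|] //; exfalso.
    move: (sp) => /andP[/prefixP[w' Ew'] _].
    have : v' ++ w' \in domf (fringe f' [:: p.1]) by rewrite mem_fringe -[_ ++ (v' ++ w')]/(v ++ w') -Ew' in_domfE Ew.
    move=> /(allP nd) /negP; apply; move: sp.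
    by rewrite Ew' /v /= strict_prefix_cons.
  case: (boolP (prefix v w)) => pv //.
  have vw : v = w by move: sp; rewrite /strict_prefix pv /= negbK => /eqP.
  by rewrite -vw drop_size t0 E.
have P2 : fringe (glue f' v t) v = t.
  by apply/fmapP => w; rewrite fringe_get glue_get prefix_prefix drop_size_cat.
by rewrite /phi /= P1 P2 -sz.
Qed.


Lemma esum_esumT (T1 T2 : choiceType) (F : T1 -> T2 -> \bar R) :
  (forall i j, 0 <= F i j)%E ->
  \esum_(i in [set: T1]) \esum_(j in [set: T2]) F i j = \esum_(k in [set: T1 * T2]) F k.1 k.2.
Proof.
move=> F0; rewrite esum_esum //; congr esum; apply/seteqP; split => // -[] //.
Qed.

Lemma mule_perm5 (a c d e g : \bar R) :
  (a * (c * (d * e * g)) = a * c * g * d * e)%E.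
Proof.
rewrite !muleA; rewrite -[(a * c * d * e * g)%E]muleA [(e * g)%E]muleC muleA.
by rewrite -[(a * c * d * g)%E]muleA [(d * g)%E]muleC muleA.
Qed.

Lemma lhs_eq :
  EgwF zeta x (fun f => \sum_(v : domf f) (G1 (val v) (prune f (val v)) * G2 (fringe f (val v))))%E
  = \esum_(k in ([set: labeled K] `*`` (fun f => [set` domf f]))%classic)
      ((gwF zeta x k.1)%:E * (G1 k.2 (prune k.1 k.2) * G2 (fringe k.1 k.2)))%E.
Proof.
have A0 f v : (0 <= (gwF zeta x f)%:E * (G1 v (prune f v) * G2 (fringe f v)))%E.
  by apply: mule_ge0; [rewrite lee_fin; exact: gwF_ge0| exact: mule_ge0].
rewrite /EgwF -(@esum_esum _ (labeled K) (seq nat) setT (fun f : labeled K => [set` domf f]%classic)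
   (fun (f : labeled K) (v : seq nat) => (gwF zeta x f)%:E * (G1 v (prune f v) * G2 (fringe f v)))%E); last first.
  by move=> f v _ _; exact: A0.
apply: eq_esum => f _.
rewrite esum_fset; [|exact: finite_fset|by move=> v _; exact: A0].
rewrite fsbig_finite ?finite_fset // set_fsetK.
rewrite [LHS](_ : _ = (gwF zeta x f)%:E *
   \sum_(w <- enum_fset (domf f)) (G1 w (prune f w) * G2 (fringe f w)))%E; last first.
  by rewrite big_seq_fsetE.
by rewrite ge0_sume_distrr // => v _; exact: mule_ge0.
Qed.

Lemma rhs_eq :
  (\sum_(p <- zip (iota 1 (size x)) x)
       (b p.2)%:E *
       \esum_(h in [set: nat])
         EhatF zeta b x p.1 h
           (fun v f => match f.[? v] with
                       | Some e => G1 v f * Egw zeta e G2 * ((b e)^-1)%:E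
                       | None => 0
                       end))%E
  = \esum_(z in [set: nat * ((labeled K * seq nat) * labeled K)]) U z.
Proof.
rewrite /U (@esum_sum _ _ _ setT (zip (iota 1 (size x)) x) xpredT (fun z p => Tf p z)); last first.
  by move=> z p _ _; exact: Tf_ge0.
apply: eq_bigr => p _.
have g0 (v : seq nat) (f : labeled K) : (0 <= match f.[? v] with
                  | Some e => G1 v f * Egw zeta e G2 * ((b e)^-1)%:E
                  | None => 0 end)%E.
  case: (f.[? v]) => // e; apply: mule_ge0; last by rewrite lee_fin invr_ge0 ltW.
  by apply: mule_ge0 => //; apply: esum_ge0 => t _; apply: mule_ge0; rewrite ?lee_fin ?gw_ge0.
transitivity (\esum_(h in [set: nat]) \esum_(fv in [set: labeled K * seq nat])
                \esum_(t in [set: labeled K]) Tf p (h, (fv, t))).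
  rewrite esumZl; [|by rewrite lee_fin ltW|].
    2: by move=> h; rewrite /EhatF; apply: esum_ge0 => fv _; apply: mule_ge0;
          [rewrite lee_fin hatPF_ge0|exact: g0].
  apply: eq_esum => h _; rewrite /EhatF esumZl; [|by rewrite lee_fin ltW|].
    2: by move=> fv; apply: mule_ge0; [rewrite lee_fin hatPF_ge0|exact: g0].
  apply: eq_esum => -[f' v] _ /=.
  rewrite /Tf /=; case E: (f'.[? v]) => [e|]; last by rewrite !mule0 esum1.
  rewrite /Egw.
  rewrite [RHS](eq_esum (b := fun t => (((b p.2 * hatPF zeta b x p.1 h (f', v) / b e)%:E * G1 v f') *
                                  ((gw zeta e t)%:E * G2 t))%E)); last first.
    by move=> t _; rewrite mulrAC EFinM muleACA.
  rewrite -esumZl; [| |by move=> t; apply: mule_ge0; rewrite ?lee_fin ?gw_ge0].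
    2: apply: mule_ge0 => //; rewrite lee_fin; apply: divr_ge0; last exact: ltW.
    2: by apply: mulr_ge0; [exact: ltW|exact: hatPF_ge0].
  by rewrite !EFinM mule_perm5.
transitivity (\esum_(h in [set: nat]) \esum_(k in [set: (labeled K * seq nat) * labeled K])
                Tf p (h, (k.1, k.2))).
  by apply: eq_esum => h _; rewrite esum_esumT // => fv t; exact: Tf_ge0.
rewrite esum_esumT; last by move=> h k; exact: Tf_ge0.
by apply: eq_esum => -[h [fv t]].
Qed.

Lemma main_eq :
  \esum_(k in ([set: labeled K] `*`` (fun f => [set` domf f]))%classic)
      ((gwF zeta x k.1)%:E * (G1 k.2 (prune k.1 k.2) * G2 (fringe k.1 k.2)))%E
  = \esum_(z in [set: nat * ((labeled K * seq nat) * labeled K)]) U z.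
Proof.
transitivity (\esum_(k in ([set: labeled K] `*`` (fun f => [set` domf f]))%classic) U (phi k)).
  by apply: eq_esum => -[f v] [_ /= vf]; rewrite U_phi.
rewrite -(esum_image _ phi U); last by move=> k1 k2 _ _; exact: phi_inj.
rewrite esum_mkcond; apply: eq_esum => z _.
case: ifPn => // nz; apply/esym/eqP; apply: contraNT nz => Uz.
by have [k kS ->] := U_support Uz; apply: mem_set; exists k.
Qed.

End Main.


Unset Implicit Arguments.
Set Strict Implicit.
Set Printing Implicit Defensive.

Theorem lemma9 (R : realType) (K : nat) (zeta : 'I_K -> seq 'I_K -> R)
  (a b : 'I_K -> R)
  (zeta_ge0 : forall i w, 0 <= zeta i w)
  (zeta_prob : forall i, (\esum_(w in [set: seq 'I_K]) (zeta i w)%:E = 1)%E)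
  (HH : hypH zeta)
  (a_left : forall j, \sum_i a i * mean_matrix zeta i j = a j)
  (a_sum : \sum_i a i = 1)
  (b_right : forall i, \sum_j mean_matrix zeta i j * b j = b i)
  (b_pos : forall i, 0 < b i)
  (ab_norm : \sum_i a i * b i = 1)
  (x : seq 'I_K)
  (G1 : seq nat -> labeled K -> \bar R) (G2 : labeled K -> \bar R)
  (G1_ge0 : forall v f, (0 <= G1 v f)%E) (G2_ge0 : forall t, (0 <= G2 t)%E) :
  EgwF zeta x (fun f => \sum_(v : domf f) (G1 (val v) (prune f (val v)) * G2 (fringe f (val v))))%E
  = (\sum_(p <- zip (iota 1 (size x)) x)
       (b p.2)%:E *
       \esum_(h in [set: nat])
         EhatF zeta b x p.1 h
           (fun v f => match f.[? v] with
                       | Some e => G1 v f * Egw zeta e G2 * ((b e)^-1)%:E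
                       | None => 0
                       end))%E.
Proof.
by rewrite (lhs_eq zeta_ge0 x G1_ge0 G2_ge0) (rhs_eq b_pos zeta_ge0 x G1_ge0 G2_ge0)
  (main_eq b_pos zeta_ge0 x G1 G2).
Qed.
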